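(* Let $q_1,q_2$ be positive probability densities on $\mathbb{R}^d$ with unnormalized versions $\tilde q_i=Z_iq_i$ and $r=Z_1/Z_2$. Let $\{T_\phi:\phi\in\mathbb{R}^l\}$ be a family of smooth invertible maps $\mathbb{R}^d\to\mathbb{R}^d$ with smooth inverses, and for each $\phi$ let $q_1^{(\phi)}$ be the density of $T_\phi(\omega)$ for $\omega\sim q_1$, with unnormalized version $\tilde q_1^{(\phi)}(x)=\tilde q_1(T_\phi^{-1}(x))\,|\det J_{T_\phi^{-1}}(x)|$ (so $\tilde q_1^{(\phi)}=Z_1q_1^{(\phi)}$). Fix $n_1,n_2\ge1$, $n=n_1+n_2$, $s_i=n_i/n$. For $\tilde r>0$, $\phi\in\mathbb{R}^l$, define $$G_{s_2}(\tilde r,\phi)=1-\frac{1}{s_2}E_{q_1^{(\phi)}}\!\left[\left(\frac{s_2\tilde q_2(\omega)\tilde r}{s_1\tilde q_1^{(\phi)}(\omega)+s_2\tilde q_2(\omega)\tilde r}\right)^{2}\right]-\frac{1}{s_1}E_{q_2}\!\left[\left(\frac{s_1\tilde q_1^{(\phi)}(\omega)}{s_1\tilde q_1^{(\phi)}(\omega)+s_2\tilde q_2(\omega)\tilde r}\right)^{2}\right].$$ Suppose $(\tilde r^*,\phi^* )$ solves $\min_{\phi\in\mathbb{R}^l}\max_{\tilde r>0}G_{s_2}(\tilde r,\phi)$, i.e. $\phi^*$ minimizes $\phi\mapsto\sup_{\tilde r>0}G_{s_2}(\tilde r,\phi)$ and $\tilde r^*$ attains $\sup_{\tilde r>0}G_{s_2}(\tilde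 r,\phi^* )$. Then $\tilde r^*=r$, $G_{s_2}(\tilde r^*,\phi)=H_{s_2}(q_1^{(\phi)},q_2)$ for every $\phi\in\mathbb{R}^l$, and $\phi^*$ minimizes $\phi\mapsto H_{s_2}(q_1^{(\phi)},q_2)$ over $\mathbb{R}^l$. Consequently $\phi^*$ also minimizes over $\mathbb{R}^l$ the quantity $\frac{1}{ns_1s_2}\left[\left(1-H_{s_2}(q_1^{(\phi)},q_2)\right)^{-1}-1\right]$.
   Context: $H_\pi(p_1,p_2)=1-\int\left(\pi p_1^{-1}+(1-\pi)p_2^{-1}\right)^{-1}d\mu$ is the weighted harmonic divergence. For i.i.d. samples of sizes $n_1,n_2$ from $q_1^{(\phi)}$ and $q_2$, the quantity $\frac{1}{ns_1s_2}[(1-H_{s_2}(q_1^{(\phi)},q_2))^{-1}-1]$ is the first-order term of the asymptotic relative mean square error of the asymptotically optimal Bridge estimator of $r$ based on $\tilde q_1^{(\phi)},\tilde q_2$. *)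

(* Defs.v *)
From HB Require Import structures.
From mathcomp Require Import all_boot all_order all_algebra.
From mathcomp Require Import all_classical all_reals all_analysis.
Set Implicit Arguments. Unset Strict Implicit. Unset Printing Implicit Defensive.
Import Order.TTheory GRing.Theory Num.Theory.
Local Open Scope classical_set_scope.
Local Open Scope ring_scope.

(* Base measure space (T, mu); in the paper T = R^d and mu = Lebesgue measure. *)

Definition pos_density {dT : measure_display} {R : realType}
  {T : measurableType dT} (mu : {measure set T -> \bar R}) (q : T -> R) : Prop :=
  measurable_fun setT q /\ (forall x, 0 < q x) /\
  (\int[mu]_x (q x)%:E = 1)%E.

Definition expect {dT : measure_display} {R : realType}
  {T : measurableType dT} (mu : {measure set T -> \bar R}) (q f : T -> R) : R :=
  Rintegral mu setT (fun x => q x * f x).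

Definition harmonic_div {dT : measure_display} {R : realType}
  {T : measurableType dT} (mu : {measure set T -> \bar R}) (pi : R) (p1 p2 : T -> R) : R :=
  1 - Rintegral mu setT (fun x => (pi / p1 x + (1 - pi) / p2 x)^-1).

(* G_{s2}(rt) for the pair (qt1, p1) (unnormalized / normalized first density)
   and (qt2, p2); s1 = 1 - s2 passed explicitly. *)
Definition G_obj {dT : measure_display} {R : realType}
  {T : measurableType dT} (mu : {measure set T -> \bar R}) (s1 s2 : R)
  (qt1 p1 qt2 p2 : T -> R) (rt : R) : R :=
  1 - s2^-1 * expect mu p1 (fun x =>
        (s2 * qt2 x * rt / (s1 * qt1 x + s2 * qt2 x * rt)) ^+ 2)
    - s1^-1 * expect mu p2 (fun x =>
        (s1 * qt1 x / (s1 * qt1 x + s2 * qt2 x * rt)) ^+ 2).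

Definition sup_pos {R : realType} (g : R -> R) : R :=
  sup [set g rt | rt in [set rt : R | 0 < rt]].

(* Main.v *)
Require Import Defs.
From HB Require Import structures.
From mathcomp Require Import all_boot all_order all_algebra.
From mathcomp Require Import all_classical all_reals all_analysis.
From mathcomp Require Import ring lra.
Import Order.TTheory GRing.Theory Num.Theory.
Local Open Scope classical_set_scope.
Local Open Scope ring_scope.

Local Notation measurable_EFinP := measurable_realfun.measurable_EFinP.
Local Notation measurable_funD := measurable_realfun.measurable_funD.
Local Notation measurable_funM := measurable_realfun.measurable_funM.
Local Notation measurable_funX := measurable_realfun.measurable_funX.
Section helpers.
Context {dT : measure_display} {R : realType} {T : measurableType dT}
  (mu : {measure set T -> \bar R}).

Lemma mfinv (f : T -> R) : measurable_fun setT f -> (forall x, 0 < f x) ->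
  measurable_fun setT (fun x => (f x)^-1).
Proof.
move=> mf fp.
have -> : (fun x => (f x)^-1) = (fun x => powR (f x) (-1)).
  by apply/funext => x; rewrite powR_inv1 // ltW.
exact: (measurableT_comp (@measurable_realfun.measurable_powR R (-1)) mf).
Qed.

Lemma integ_bound (f g : T -> R) : measurable_fun setT f ->
  mu.-integrable setT (EFin \o g) -> (forall x, `|f x| <= `|g x|) ->
  mu.-integrable setT (EFin \o f).
Proof.
move=> mf ig fg; apply: (le_integrable _ _ _ ig) => //.
  exact/measurable_EFinP.
by move=> x _ /=; rewrite lee_fin.
Qed.

Lemma dens_integrable q : pos_density mu q -> mu.-integrable setT (EFin \o q).
Proof.
move=> [mq [qp q1]]; apply/integrableP; split; first exact/measurable_EFinP.
rewrite (eq_integral (fun x => (q x)%:E)); first by rewrite q1 ltry.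
by move=> x _ /=; rewrite gtr0_norm.
Qed.

Lemma dens_muT q : pos_density mu q -> mu setT != 0%E.
Proof.
move=> [mq [qp q1]]; apply/eqP => m0.
have := @null_set_integral _ _ _ mu setT (EFin \o q) measurableT
  (iffRL (measurable_EFinP _ _) mq) m0.
by rewrite q1 => /eqP; rewrite eqe oner_eq0.
Qed.

Lemma Rint_pos (g : T -> R) : measurable_fun setT g -> (forall x, 0 < g x) ->
  mu.-integrable setT (EFin \o g) -> mu setT != 0%E ->
  0 < Rintegral mu setT g.
Proof.
move=> mg gp ig mT.
rewrite lt_neqAle Rintegral_ge0 ?andbT; last by move=> x _; exact: ltW.
apply/negP => /eqP I0.
have fin : (\int[mu]_x (g x)%:E)%E \is a fin_num.
  by apply: integrable_fin_num.
have I0' : (\int[mu]_x `|(EFin \o g) x| = 0)%E.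
  rewrite (eq_integral (fun x => (g x)%:E)); last first.
    by move=> x _ /=; rewrite gtr0_norm.
  by rewrite -(fineK fin) -/(Rintegral mu setT g) -I0.
have := (ae_eq_integral_abs mu measurableT (iffRL (measurable_EFinP _ _) mg)).1 I0'.
move=> [A [mA A0 sA]].
move: mT; rewrite -(@measure_le0 _ _ _ mu) => /negP; apply.
rewrite -A0 le_measure ?inE //.
move=> x _; apply: sA => /= /(_ I) /= [] /eqP; rewrite (gt_eqF (gp x)).
done.
Qed.

Lemma Rint_pos' (g : T -> R) : (forall x, 0 < g x) ->
  mu.-integrable setT (EFin \o g) -> mu setT != 0%E ->
  0 < Rintegral mu setT g.
Proof.
move=> gp ig; apply: Rint_pos => //.
by move/integrableP: ig => [/measurable_EFinP].
Qed.

Lemma iZl k (f : T -> R) : mu.-integrable setT (EFin \o f) ->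
  mu.-integrable setT (EFin \o (fun x => k * f x)).
Proof.
move=> i; apply: (eq_integrable measurableT _ _ _ (integrableZl measurableT k i)).
by move=> x _ /=; rewrite EFinM.
Qed.

Lemma iD (f g : T -> R) : mu.-integrable setT (EFin \o f) ->
  mu.-integrable setT (EFin \o g) ->
  mu.-integrable setT (EFin \o (fun x => f x + g x)).
Proof.
move=> i j; apply: (eq_integrable measurableT _ _ _ (integrableD measurableT i j)).
by move=> x _ /=; rewrite EFinD.
Qed.

Lemma iB (f g : T -> R) : mu.-integrable setT (EFin \o f) ->
  mu.-integrable setT (EFin \o g) ->
  mu.-integrable setT (EFin \o (fun x => f x - g x)).
Proof.
move=> i j; apply: (eq_integrable measurableT _ _ _ (integrableB measurableT i j)).
by move=> x _ /=; rewrite EFinB.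
Qed.

End helpers.
Definition Dfun {R : realType} (Z1 Z2 s1 s2 rt a b : R) : R :=
  let t := rt * Z2 / Z1 in
  a * b * ((s1 * a) * (s2 * b) * (t - 1)^+2) /
    ((s1 * a + s2 * b * t)^+2 * (s1 * a + s2 * b)).

Lemma pw {R : realType} (Z1 Z2 s1 s2 rt a b : R) : 0 < Z1 -> 0 < Z2 -> 0 < s1 -> 0 < s2 ->
  s1 + s2 = 1 -> 0 < rt -> 0 < a -> 0 < b ->
  s2^-1 * (a * (s2 * (Z2 * b) * rt / (s1 * (Z1 * a) + s2 * (Z2 * b) * rt)) ^+ 2)
  + s1^-1 * (b * (s1 * (Z1 * a) / (s1 * (Z1 * a) + s2 * (Z2 * b) * rt)) ^+ 2)
 = (s2 / a + (1 - s2) / b)^-1 + Dfun Z1 Z2 s1 s2 rt a b.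
Proof.
move=> z1 z2 h1 h2 hs r a0 b0.
have -> : 1 - s2 = s1 by lra.
rewrite /Dfun.
have e1 : s1 * (Z1 * a) + s2 * (Z2 * b) * rt != 0.
  by apply/lt0r_neq0; rewrite addr_gt0 // ?mulr_gt0.
have e2 : s1 * a + s2 * b * (rt * Z2 / Z1) != 0.
  by apply/lt0r_neq0; rewrite addr_gt0 // ?mulr_gt0 // ?invr_gt0.
have e3 : s1 * a + s2 * b != 0.
  by apply/lt0r_neq0; rewrite addr_gt0 // ?mulr_gt0.
have e4 : s2 / a + s1 / b != 0.
  by apply/lt0r_neq0; rewrite addr_gt0 // ?mulr_gt0 // ?invr_gt0.
field.
have nz : forall x : R, 0 < x -> (x != 0) = true by move=> x; move/lt0r_neq0.
by rewrite !nz // ?addr_gt0 // ?mulr_gt0.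
Qed.

Lemma Dfun_ge0 {R : realType} (Z1 Z2 s1 s2 rt a b : R) : 0 < Z1 -> 0 < Z2 -> 0 < s1 -> 0 < s2 ->
  0 < rt -> 0 < a -> 0 < b -> 0 <= Dfun Z1 Z2 s1 s2 rt a b.
Proof.
move=> z1 z2 h1 h2 r a0 b0; rewrite /Dfun.
apply: divr_ge0.
  apply: mulr_ge0; first by rewrite mulr_ge0 // ltW.
  by apply: mulr_ge0; [rewrite !mulr_ge0 // ltW | exact: sqr_ge0].
apply: mulr_ge0; first exact: sqr_ge0.
by rewrite ltW // addr_gt0 // mulr_gt0.
Qed.

Lemma Dfun_gt0 {R : realType} (Z1 Z2 s1 s2 rt a b : R) : 0 < Z1 -> 0 < Z2 -> 0 < s1 -> 0 < s2 ->
  0 < rt -> 0 < a -> 0 < b -> rt != Z1 / Z2 -> 0 < Dfun Z1 Z2 s1 s2 rt a b.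
Proof.
move=> z1 z2 h1 h2 r a0 b0 ne; rewrite /Dfun.
have t1 : rt * Z2 / Z1 - 1 != 0.
  apply: contra ne; rewrite subr_eq0 => /eqP e; apply/eqP.
  have : rt * Z2 = Z1 by rewrite -[Z1]mul1r -e mulfVK // gt_eqF.
  by move=> <-; rewrite mulfK // gt_eqF.
have p1 : 0 < (rt * Z2 / Z1 - 1) ^+ 2 by rewrite lt_neqAle eq_sym sqrf_eq0 t1 sqr_ge0.
have p2 : 0 < s1 * a + s2 * b * (rt * Z2 / Z1) by rewrite addr_gt0 // !mulr_gt0 // invr_gt0.
apply: divr_gt0.
  apply: mulr_gt0; first exact: mulr_gt0.
  by apply: mulr_gt0 => //; apply: mulr_gt0; apply: mulr_gt0.
apply: mulr_gt0; first exact: exprn_gt0.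
by rewrite addr_gt0 // mulr_gt0.
Qed.

Lemma Dfun_r {R : realType} (Z1 Z2 s1 s2 a b : R) : 0 < Z1 -> 0 < Z2 ->
  Dfun Z1 Z2 s1 s2 (Z1 / Z2) a b = 0.
Proof.
move=> z1 z2; rewrite /Dfun mulfVK ?gt_eqF // divff ?gt_eqF // subrr.
by rewrite expr0n /= !mulr0 mul0r.
Qed.

Ltac mf := repeat (first [ assumption | exact: measurable_cst
  | apply: measurable_funD | apply: measurable_funX | apply: measurable_funM ]).

Lemma frac_le1 {R : realType} (u v : R) : 0 < u -> 0 < v -> u / (v + u) <= 1.
Proof.
move=> u0 v0; rewrite ler_pdivrMr ?addr_gt0 // mul1r lerDr ltW //.
Qed.

Lemma frac_le1' {R : realType} (u v : R) : 0 < u -> 0 < v -> u / (u + v) <= 1.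
Proof. by move=> u0 v0; rewrite addrC frac_le1. Qed.

Section key.
Context {dT : measure_display} {R : realType} {T : measurableType dT}
  (mu : {measure set T -> \bar R}).
Variables (p1 q2 : T -> R) (Z1 Z2 s1 s2 : R).
Hypotheses (dp1 : pos_density mu p1) (dq2 : pos_density mu q2)
  (z1 : 0 < Z1) (z2 : 0 < Z2) (h1 : 0 < s1) (h2 : 0 < s2) (hs : s1 + s2 = 1).

Let mp1 : measurable_fun setT p1. Proof. by case: dp1. Qed.
Let mq2 : measurable_fun setT q2. Proof. by case: dq2. Qed.
Let pp1 : forall x, 0 < p1 x. Proof. by case: dp1 => _ []. Qed.
Let pq2 : forall x, 0 < q2 x. Proof. by case: dq2 => _ []. Qed.
Let ip1 := @dens_integrable _ _ _ mu _ dp1.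
Let iq2 := @dens_integrable _ _ _ mu _ dq2.
Let mip1 : measurable_fun setT (fun x => (p1 x)^-1). Proof. exact: mfinv. Qed.
Let miq2 : measurable_fun setT (fun x => (q2 x)^-1). Proof. exact: mfinv. Qed.

Let hs1 : 0 < 1 - s2. Proof. by rewrite subr_gt0 -hs -subr_gt0 addrK. Qed.

Definition hf x := (s2 / p1 x + (1 - s2) / q2 x)^-1.

Lemma hf_pos x : 0 < hf x.
Proof.
by rewrite /hf invr_gt0 addr_gt0 // divr_gt0.
Qed.

Lemma hf_int : mu.-integrable setT (EFin \o hf).
Proof.
apply: (@integ_bound _ _ _ mu _ (fun x => s2^-1 * p1 x)); last 2 first.
- exact: iZl.
- move=> x; rewrite !gtr0_norm ?hf_pos ?mulr_gt0 ?invr_gt0 //.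
  have -> : s2^-1 * p1 x = (s2 / p1 x)^-1 by rewrite invfM invrK.
  rewrite /hf lef_pV2 ?posrE ?addr_gt0 ?divr_gt0 //.
  by rewrite lerDl divr_ge0 // ltW.
apply: mfinv; last by move=> x; rewrite addr_gt0 ?divr_gt0.
mf.
Qed.

Section rt.
Variable rt : R.
Hypothesis rt0 : 0 < rt.

Let den x := s1 * (Z1 * p1 x) + s2 * (Z2 * q2 x) * rt.
Let den_pos x : 0 < den x.
Proof. by rewrite /den addr_gt0 // !mulr_gt0. Qed.
Let mden : measurable_fun setT (fun x => (den x)^-1).
Proof. by apply: mfinv => //; rewrite /den; mf. Qed.

Definition f1 x := p1 x * (s2 * (Z2 * q2 x) * rt /
  (s1 * (Z1 * p1 x) + s2 * (Z2 * q2 x) * rt)) ^+ 2.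
Definition f2 x := q2 x * (s1 * (Z1 * p1 x) /
  (s1 * (Z1 * p1 x) + s2 * (Z2 * q2 x) * rt)) ^+ 2.
Definition Df x := Dfun Z1 Z2 s1 s2 rt (p1 x) (q2 x).

Lemma f1_int : mu.-integrable setT (EFin \o f1).
Proof.
apply: (@integ_bound _ _ _ mu _ p1) => //; first by rewrite /f1; mf.
move=> x; rewrite /f1 (ger0_norm (ltW (pp1 x))) ger0_norm; last first.
  by rewrite mulr_ge0 ?sqr_ge0 // ltW.
apply: ler_piMr; first exact: ltW.
apply: exprn_ile1; first by rewrite divr_ge0 // ltW // ?den_pos // !mulr_gt0.
by apply: frac_le1; rewrite !mulr_gt0.
Qed.

Lemma f2_int : mu.-integrable setT (EFin \o f2).
Proof.
apply: (@integ_bound _ _ _ mu _ q2) => //; first by rewrite /f2; mf.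
move=> x; rewrite /f2 (ger0_norm (ltW (pq2 x))) ger0_norm; last first.
  by rewrite mulr_ge0 ?sqr_ge0 // ltW.
apply: ler_piMr; first exact: ltW.
apply: exprn_ile1; first by rewrite divr_ge0 // ltW // ?den_pos // !mulr_gt0.
by apply: frac_le1'; rewrite !mulr_gt0.
Qed.

Lemma sum_eq x : s2^-1 * f1 x + s1^-1 * f2 x = hf x + Df x.
Proof. by rewrite /f1 /f2 /hf /Df pw. Qed.

Lemma Df_int : mu.-integrable setT (EFin \o Df).
Proof.
have := iB mu _ _ (iD mu _ _ (iZl mu s2^-1 _ f1_int) (iZl mu s1^-1 _ f2_int)) hf_int.
apply: eq_integrable => // x _ /=; rewrite sum_eq; congr (_%:E).
by rewrite addrC addKr.
Qed.

Lemma key : G_obj mu s1 s2 (fun x => Z1 * p1 x) p1 (fun x => Z2 * q2 x) q2 rt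
  = harmonic_div mu s2 p1 q2 - Rintegral mu setT Df.
Proof.
rewrite /G_obj /expect /harmonic_div /=.
have E : s2^-1 * Rintegral mu setT f1 + s1^-1 * Rintegral mu setT f2 =
         Rintegral mu setT hf + Rintegral mu setT Df.
  rewrite -(RintegralZl (f:=f1)) // ?f1_int // -(RintegralZl (f:=f2)) // ?f2_int //.
  have i1 := iZl mu s2^-1 _ f1_int; have i2 := iZl mu s1^-1 _ f2_int.
  have i3 := hf_int; have i4 := Df_int.
  rewrite -(RintegralD (f1 := fun x => s2^-1 * f1 x) (f2 := fun x => s1^-1 * f2 x)) //.
  rewrite -(RintegralD (f1 := hf) (f2 := Df)) //.
  by apply: eq_Rintegral => x _; rewrite sum_eq.
rewrite -/(Rintegral mu setT f1) -/(Rintegral mu setT f2).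
move: E; rewrite /f1 /f2 => E.
by rewrite -addrA -opprD E opprD addrA.
Qed.

Lemma Df_ge0 : 0 <= Rintegral mu setT Df.
Proof. by apply: Rintegral_ge0 => x _; apply: Dfun_ge0. Qed.

Lemma Df_gt0 : rt != Z1 / Z2 -> 0 < Rintegral mu setT Df.
Proof.
move=> ne; apply: Rint_pos' => //; first by move=> x; apply: Dfun_gt0.
- exact: Df_int.
- exact: (@dens_muT _ _ _ mu _ dp1).
Qed.

End rt.

Lemma Df_r : Rintegral mu setT (Df (Z1 / Z2)) = 0.
Proof.
rewrite (@eq_Rintegral _ _ _ mu setT (fun _ => 0)); last by move=> x _; rewrite /Df Dfun_r.
by rewrite Rintegral_cst // mul0r.
Qed.

Lemma H_lt1 : 0 < 1 - harmonic_div mu s2 p1 q2.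
Proof.
rewrite /harmonic_div opprB addrC subrK.
apply: Rint_pos' => //; first exact: hf_pos.
- exact: hf_int.
- exact: (@dens_muT _ _ _ mu _ dp1).
Qed.

End key.

Lemma sup_max {R : realType} (g : R -> R) r : 0 < r ->
  (forall x, 0 < x -> g x <= g r) -> sup_pos g = g r.
Proof.
move=> r0 hg; rewrite /sup_pos; apply/le_anti/andP; split.
  apply: ge_sup; first by exists (g r), r.
  by move=> _ [x x0 <-]; exact: hg.
apply: ub_le_sup; last by exists r.
by exists (g r) => _ [x x0 <-]; exact: hg.
Qed.

Theorem proposition3 (R : realType) (dT : measure_display) (T : measurableType dT)
  (mu : {measure set T -> \bar R}) (l : nat)
  (q1 q2 qt1 qt2 : T -> R) (Z1 Z2 : R)
  (Tphi Tphi_inv : 'rV[R]_l -> T -> T)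
  (q1phi qt1phi : 'rV[R]_l -> T -> R)
  (n1 n2 : nat) (rs : R) (phis : 'rV[R]_l) :
  pos_density mu q1 -> pos_density mu q2 ->
  0 < Z1 -> 0 < Z2 ->
  (forall x, qt1 x = Z1 * q1 x) -> (forall x, qt2 x = Z2 * q2 x) ->
  (* T_phi : invertible, measurable with measurable inverse *)
  (forall phi, measurable_fun setT (Tphi phi)) ->
  (forall phi, measurable_fun setT (Tphi_inv phi)) ->
  (forall phi, cancel (Tphi phi) (Tphi_inv phi)) ->
  (forall phi, cancel (Tphi_inv phi) (Tphi phi)) ->
  (* q1phi phi : positive density of T_phi(w), w ~ q1 *)
  (forall phi, pos_density mu (q1phi phi)) ->
  (forall phi A, measurable A ->
     (\int[mu]_(x in A) (q1phi phi x)%:E =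
      \int[mu]_(x in Tphi phi @^-1` A) (q1 x)%:E)%E) ->
  (* unnormalized version *)
  (forall phi x, qt1phi phi x = Z1 * q1phi phi x) ->
  (1 <= n1)%N -> (1 <= n2)%N ->
  let n : R := (n1 + n2)%:R in
  let s1 : R := n1%:R / n in
  let s2 : R := n2%:R / n in
  let G := fun rt phi => G_obj mu s1 s2 (qt1phi phi) (q1phi phi) qt2 q2 rt in
  let H := fun phi => harmonic_div mu s2 (q1phi phi) q2 in
  (* (rs, phis) solves min_phi max_{rt>0} G(rt, phi) *)
  0 < rs ->
  G rs phis = sup_pos (fun rt => G rt phis) ->
  (forall phi, sup_pos (fun rt => G rt phis) <= sup_pos (fun rt => G rt phi)) ->
  [/\ rs = Z1 / Z2,
      (forall phi, G rs phi = H phi),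
      (forall phi, H phis <= H phi) &
      (forall phi, (n * s1 * s2)^-1 * ((1 - H phis)^-1 - 1)
                   <= (n * s1 * s2)^-1 * ((1 - H phi)^-1 - 1))].
Proof.
move=> dq1 dq2 z1 z2 e1 e2 mT mTi c1 c2 dphi pf e1phi hn1 hn2 n s1 s2 G H rs0 hrs hmin.
have n0 : 0 < n by rewrite /n ltr0n addn_gt0 hn1.
have s1p : 0 < s1 by rewrite /s1 divr_gt0 // ltr0n.
have s2p : 0 < s2 by rewrite /s2 divr_gt0 // ltr0n.
have hs : s1 + s2 = 1 by rewrite /s1 /s2 -mulrDl -natrD divff // gt_eqF.
have r0 : 0 < Z1 / Z2 by rewrite divr_gt0.
have Gphi : forall phi rt, 0 < rt ->
    G rt phi = H phi - Rintegral mu setT (Df (q1phi phi) q2 Z1 Z2 s1 s2 rt).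
  move=> phi rt rt0; rewrite /G /H.
  have -> : qt1phi phi = (fun x => Z1 * q1phi phi x) by apply/funext => x; exact: e1phi.
  have -> : qt2 = (fun x => Z2 * q2 x) by apply/funext.
  exact: key.
have supH : forall phi, sup_pos (fun rt => G rt phi) = H phi.
  move=> phi; rewrite (@sup_max _ _ (Z1 / Z2)) //.
    by rewrite Gphi // Df_r // subr0.
  move=> x x0; rewrite !Gphi // Df_r // subr0 gerBl //.
  exact: (Df_ge0 mu _ _ _ _ _ _ (dphi phi) dq2 z1 z2 s1p s2p _ x0).
have rsE : rs = Z1 / Z2.
  apply/eqP; apply: contraT => ne.
  have := Df_gt0 mu _ _ _ _ _ _ (dphi phis) dq2 z1 z2 s1p s2p hs _ rs0 ne.
  move: hrs; rewrite supH Gphi // => hrs.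
  move/eqP: hrs; rewrite subr_eq addrC -subr_eq subrr eq_sym => /eqP ->.
  by rewrite ltxx.
have Hl : forall phi, 0 < 1 - H phi by move=> phi; exact: (H_lt1 mu _ _ _ _ (dphi phi) dq2 s1p s2p hs).
have Hmin : forall phi, H phis <= H phi by move=> phi; rewrite -!supH; exact: hmin.
split => //.
- by move=> phi; rewrite rsE Gphi // Df_r // subr0.
- move=> phi; have c : 0 < (n * s1 * s2)^-1 by rewrite invr_gt0; apply: mulr_gt0 => //; apply: mulr_gt0.
  rewrite ler_pM2l // lerD2r lef_pV2 ?posrE //.
  by rewrite lerD2l lerN2.
Qed.
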